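(* Identify $\mathbb{R}^2$ with $\mathbb{C}$, let $\tau=\frac{1+\sqrt5}{2}$, $\xi=e^{i\pi/5}$, $\alpha_1=1$, $\alpha_2=e^{4\pi i/5}$, $\alpha_H=\tau(\alpha_1+\alpha_2)$. Let $r_1,r_2:\mathbb{C}\to\mathbb{C}$ be $r_j(v)=v-2\,\mathrm{Re}(v\overline{\alpha_j})\,\alpha_j$ (reflection in the line through $0$ orthogonal to $\alpha_j$), and $T(v)=v+\alpha_H$. For $n\in\mathbb{N}_0$ let $Q_2(n)$ be the set of all points $w(0)$, where $w$ ranges over all finite compositions of the maps $T,r_1,r_2$ (including the empty composition) in which $T$ occurs at most $n$ times. Then $$Q_2(n)=\Big\{\sum_{j=0}^9 n_j\xi^j \;\Big|\; n_j\in\mathbb{N}_0,\ \sum_{j=0}^9 n_j=l\le n\Big\}.$$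
   Context: $\mathbb{N}_0$ denotes the nonnegative integers. Note $\alpha_H=e^{2\pi i/5}$ has length $1$, and $\{\xi^j: 0\le j\le 9\}$ is the root system of the Coxeter group $H_2$ (dihedral group of order 10) generated by $r_1,r_2$. *)

(* Defs.v *)
From Stdlib Require Import Reals List.
From Coquelicot Require Import Coquelicot.
Open Scope R_scope.

Definition cexpi (theta : R) : C := (cos theta, sin theta).

Definition tau : R := (1 + sqrt 5) / 2.
Definition xi : C := cexpi (PI / 5).
Definition alpha1 : C := RtoC 1.
Definition alpha2 : C := cexpi (4 * PI / 5).
Definition alphaH : C := Cmult (RtoC tau) (Cplus alpha1 alpha2).

Definition refl (a v : C) : C :=
  Cminus v (Cmult (RtoC (2 * Re (Cmult v (Cconj a)))) a).
Definition r1 (v : C) : C := refl alpha1 v.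
Definition r2 (v : C) : C := refl alpha2 v.
Definition Tr (v : C) : C := Cplus v alphaH.

Inductive gen := GT | GR1 | GR2.
Definition gen_map (g : gen) : C -> C :=
  match g with GT => Tr | GR1 => r1 | GR2 => r2 end.

Definition word_map (w : list gen) : C -> C :=
  fold_right (fun g f => fun v => gen_map g (f v)) (fun v => v) w.

Definition countT (w : list gen) : nat :=
  length (filter (fun g => match g with GT => true | _ => false end) w).

Definition Q2 (n : nat) (z : C) : Prop :=
  exists w : list gen, (countT w <= n)%nat /\ word_map w (RtoC 0) = z.

Definition lattice_sum (c : nat -> nat) : C :=
  fold_right Cplus (RtoC 0)
    (map (fun j => Cmult (RtoC (INR (c j))) (Cpow xi j)) (seq 0 10)).

Definition coeff_total (c : nat -> nat) : nat :=
  fold_right Nat.add 0%nat (map c (seq 0 10)).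

(* Main.v *)
Require Import Defs.
From Stdlib Require Import Reals List Lra Lia ZArith Psatz.
From Coquelicot Require Import Coquelicot.
Open Scope R_scope.

Lemma Ceq (x y : C) : fst x = fst y -> snd x = snd y -> x = y.
Proof. destruct x, y; simpl; intros; subst; reflexivity. Qed.

Lemma sc1 t : sin t * sin t + cos t * cos t = 1.
Proof. pose proof (sin2_cos2 t). unfold Rsqr in H. lra. Qed.

Lemma cexpi_mult a b : Cmult (cexpi a) (cexpi b) = cexpi (a + b).
Proof. unfold cexpi; apply Ceq; simpl; rewrite ?cos_plus, ?sin_plus; ring. Qed.

Definition E (k : Z) : C := cexpi (IZR k * PI / 5).

Lemma E_add a b : Cmult (E a) (E b) = E (a + b).
Proof. unfold E; rewrite cexpi_mult, plus_IZR; f_equal; field. Qed.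

Lemma E_conj a : Cconj (E a) = E (- a).
Proof. unfold E, cexpi, Cconj; simpl. rewrite opp_IZR.
  replace (- IZR a * PI / 5) with (- (IZR a * PI / 5)) by field.
  rewrite cos_neg, sin_neg; reflexivity. Qed.

Lemma E0 : E 0 = RtoC 1.
Proof. unfold E, cexpi, RtoC. replace (IZR 0 * PI / 5) with 0 by field.
  rewrite cos_0, sin_0; reflexivity. Qed.

Lemma E5 : E 5 = RtoC (-1).
Proof. unfold E, cexpi, RtoC. replace (IZR 5 * PI / 5) with PI by field.
  rewrite cos_PI, sin_PI; reflexivity. Qed.

Lemma E10 : E 10 = RtoC 1.
Proof. replace 10%Z with (5+5)%Z by reflexivity. rewrite <- E_add, E5.
  apply Ceq; simpl; ring. Qed.

Lemma E_neg a : Copp (E a) = E (a + 5).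
Proof. rewrite <- E_add, E5. apply Ceq; simpl; ring. Qed.

Lemma E_period a m : E (a + 10 * m) = E a.
Proof.
  induction m using Z.peano_ind.
  - rewrite Z.add_0_r; reflexivity.
  - replace (a + 10 * Z.succ m)%Z with ((a + 10 * m) + 10)%Z by lia.
    rewrite <- E_add, IHm, E10. apply Ceq; simpl; ring.
  - replace (a + 10 * Z.pred m)%Z with ((a + 10 * m) + (-10))%Z by lia.
    rewrite <- E_add, IHm. replace (E (-10)) with (Cconj (E 10)) by (rewrite E_conj; reflexivity).
    rewrite E10. apply Ceq; simpl; ring.
Qed.

Lemma E_eqm a b : ((a - b) mod 10 = 0)%Z -> E a = E b.
Proof. intros H. pose proof (Z.div_mod (a - b) 10) as Hd. rewrite H in Hd.
  replace a with (b + 10 * ((a - b) / 10))%Z by lia. apply E_period. Qed.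

Lemma E_mod a : E (a mod 10) = E a.
Proof. apply E_eqm. rewrite Zminus_mod, Z.mod_mod, Z.sub_diag by lia. reflexivity. Qed.

Lemma xi_pow j : Cpow xi j = E (Z.of_nat j).
Proof. induction j.
  - simpl. rewrite E0. reflexivity.
  - simpl Cpow. rewrite IHj. replace xi with (E 1).
    + rewrite E_add. rewrite Nat2Z.inj_succ, Z.add_comm. reflexivity.
    + unfold E, xi. f_equal. field.
Qed.

Lemma E_unit a : fst (E a) * fst (E a) + snd (E a) * snd (E a) = 1.
Proof. unfold E, cexpi; simpl. pose proof (sc1 (IZR a * PI / 5)). lra. Qed.

Lemma refl_formula a v : fst a * fst a + snd a * snd a = 1 ->
  refl a v = Copp (Cmult (Cmult (Cconj v) a) a).
Proof. intros H. destruct a as [a1 a2], v as [v1 v2]. simpl in H.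
  unfold refl; apply Ceq; simpl.
  - transitivity (v1 * (a1 * a1 + a2 * a2) - 2 * (v1 * a1 + - (v2 * - a2)) * a1); [rewrite H; ring| ring].
  - transitivity (v2 * (a1 * a1 + a2 * a2) - 2 * (v1 * a1 + - (v2 * - a2)) * a2); [rewrite H; ring| ring].
Qed.

Lemma refl_add a u v : refl a (Cplus u v) = Cplus (refl a u) (refl a v).
Proof. unfold refl; apply Ceq; simpl; ring. Qed.

Lemma refl_invol a v : fst a * fst a + snd a * snd a = 1 -> refl a (refl a v) = v.
Proof. intros H. rewrite !refl_formula by exact H.
  destruct a as [a1 a2], v as [v1 v2]. simpl in H. apply Ceq; simpl.
  - transitivity (v1 * (a1 * a1 + a2 * a2) * (a1 * a1 + a2 * a2)); [ring | rewrite H; ring].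
  - transitivity (v2 * (a1 * a1 + a2 * a2) * (a1 * a1 + a2 * a2)); [ring | rewrite H; ring].
Qed.

Lemma refl_E a k : refl (E a) (E k) = E (2 * a - k + 5).
Proof. rewrite refl_formula by apply E_unit. rewrite E_conj, !E_add, E_neg.
  replace (- k + a + a + 5)%Z with (2 * a - k + 5)%Z by lia. reflexivity. Qed.

Lemma alpha1E : alpha1 = E 0.
Proof. rewrite E0; reflexivity. Qed.
Lemma alpha2E : alpha2 = E 4.
Proof. reflexivity. Qed.

Lemma r1E k : r1 (E k) = E (5 - k).
Proof. unfold r1; rewrite alpha1E, refl_E. replace (2*0 - k + 5)%Z with (5 - k)%Z by lia. reflexivity. Qed.
Lemma r2E k : r2 (E k) = E (13 - k).
Proof. unfold r2; rewrite alpha2E, refl_E. replace (2*4 - k + 5)%Z with (13 - k)%Z by lia. reflexivity. Qed.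

Lemma cos_pi5 : cos (PI / 5) = tau / 2.
Proof.
  set (c := cos (PI/5)). set (s := sin (PI/5)).
  assert (Hsc : s * s + c * c = 1) by apply sc1.
  assert (H3 : cos (3 * (PI/5)) = - cos (2 * (PI/5))).
  { replace (3 * (PI/5)) with (PI - 2 * (PI/5)) by field.
    apply Rtrigo_facts.cos_pi_minus. }
  replace (3 * (PI/5)) with (2 * (PI/5) + PI/5) in H3 by field.
  rewrite cos_plus, sin_2a, cos_2a in H3. fold c s in H3.
  assert (Hc : 0 < c). { apply cos_gt_0; pose proof PI_RGT_0; lra. }
  assert (Hq : 4 * c * c - 2 * c - 1 = 0).
  { assert ((c + 1) * (4 * c * c - 2 * c - 1) = 0) by nra.
    apply Rmult_integral in H. destruct H; [lra | exact H]. }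
  assert (H5 : sqrt 5 * sqrt 5 = 5) by (apply sqrt_sqrt; lra).
  assert (H5p : 0 <= sqrt 5) by apply sqrt_pos.
  assert (H51 : 1 < sqrt 5) by nra.
  set (d := (1 + sqrt 5) / 2 / 2).
  assert (Hd : 4 * d * d - 2 * d - 1 = 0) by (unfold d; nra).
  assert (Hd2 : 1/2 < d) by (unfold d; lra).
  assert ((c - d) * (4 * (c + d) - 2) = 0) by nra.
  apply Rmult_integral in H. destruct H; [unfold tau; fold d; lra | lra].
Qed.

Lemma tau2 : tau * tau = tau + 1.
Proof. unfold tau. assert (H5 : sqrt 5 * sqrt 5 = 5) by (apply sqrt_sqrt; lra). nra. Qed.

Lemma alphaHE : alphaH = E 2.
Proof.
  unfold alphaH.
  assert (E1 : E 1 = (tau/2, sin (PI/5))).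
  { unfold E, cexpi. replace (IZR 1 * PI / 5) with (PI/5) by field. rewrite cos_pi5. reflexivity. }
  assert (Hs : sin (PI/5) * sin (PI/5) = 1 - tau/2 * (tau/2)) by (pose proof (sc1 (PI/5)); rewrite cos_pi5 in H; lra).
  pose proof tau2 as Ht.
  set (s := sin (PI/5)) in *. set (t := tau) in *. clearbody s t.
  assert (E2 : E 2 = ((t - 1)/2, t * s)).
  { replace (E 2) with (Cmult (E 1) (E 1)) by (rewrite !E_add; reflexivity).
    rewrite E1. apply Ceq; simpl.
    - transitivity (t * t / 4 - s * s); [field | rewrite Hs; lra].
    - field. }
  assert (E4 : E 4 = (-t/2, s)).
  { replace (E 4) with (Cmult (E 2) (E 2)) by (rewrite !E_add; reflexivity).
    rewrite E2. apply Ceq; simpl.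
    - transitivity ((t*t - 2 * t + 1)/4 - (t * t) * (s * s)); [field | rewrite Hs, Ht].
      assert (Ht3 : t * t * t = 2 * t + 1).
      { replace (t*t*t) with (t * (t * t)) by ring. rewrite Ht. replace (t * (t+1)) with (t*t + t) by ring. rewrite Ht. ring. }
      transitivity ((2 - t)/4 - (t + 1) + (t*t*t + t*t)/4); [field|rewrite Ht3, Ht; field].
    - transitivity ((t*t - t) * s); [field| rewrite Ht; ring]. }
  rewrite alpha1E, alpha2E, E4, E2, E0. apply Ceq; simpl.
  - transitivity (t - t * t / 2); [field | rewrite Ht; field].
  - field.
Qed.

Definition ListSum (L : list Z) : C := fold_right (fun a s => Cplus (E a) s) (RtoC 0) L.

Lemma RtoC_plus a b : RtoC (a + b) = Cplus (RtoC a) (RtoC b).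
Proof. apply Ceq; simpl; ring. Qed.

Lemma refl_0 a : refl a (RtoC 0) = RtoC 0.
Proof. unfold refl; apply Ceq; simpl; ring. Qed.

Lemma refl_list a f L : (forall k, refl a (E k) = E (f k)) ->
  refl a (ListSum L) = ListSum (map f L).
Proof. intros H; induction L as [|x L IH]; simpl.
  - apply refl_0.
  - rewrite refl_add, H, IH; reflexivity. Qed.

Definition countT_cons_T w : countT (GT :: w) = S (countT w) := eq_refl.
Definition countT_cons_1 w : countT (GR1 :: w) = countT w := eq_refl.
Definition countT_cons_2 w : countT (GR2 :: w) = countT w := eq_refl.

Lemma word_list w : exists L, length L = countT w /\ word_map w (RtoC 0) = ListSum L.
Proof.
  induction w as [|g w IH].
  - exists nil; split; reflexivity.
  - destruct IH as [L [HL HW]].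
    change (word_map (g :: w) (RtoC 0)) with (gen_map g (word_map w (RtoC 0))).
    rewrite HW. destruct g; simpl gen_map.
    + exists (2%Z :: L). rewrite countT_cons_T. split; [simpl; lia|].
      unfold Tr; rewrite alphaHE; simpl; ring.
    + exists (map (fun a => 5 - a)%Z L). rewrite countT_cons_1, length_map. split; [exact HL|].
      apply refl_list. intro k; exact (r1E k).
    + exists (map (fun a => 13 - a)%Z L). rewrite countT_cons_2, length_map. split; [exact HL|].
      apply refl_list. intro k; exact (r2E k).
Qed.

Definition ind (k j : nat) : nat := if Nat.eqb j k then 1%nat else 0%nat.

Lemma lattice_sum_add c1 c2 :
  lattice_sum (fun j => (c1 j + c2 j)%nat) = Cplus (lattice_sum c1) (lattice_sum c2).
Proof. unfold lattice_sum; cbn [seq map fold_right]. rewrite !plus_INR, !RtoC_plus. ring. Qed.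

Lemma coeff_total_add c1 c2 :
  coeff_total (fun j => (c1 j + c2 j)%nat) = (coeff_total c1 + coeff_total c2)%nat.
Proof. unfold coeff_total; cbn [seq map fold_right]. lia. Qed.

Lemma ind_props k : (k < 10)%nat -> coeff_total (ind k) = 1%nat /\ lattice_sum (ind k) = Cpow xi k.
Proof.
  intros Hk. unfold lattice_sum, coeff_total, ind.
  do 10 (destruct k as [|k]; [cbn [seq map fold_right Nat.eqb INR Nat.add]; split; [reflexivity| ring] |]).
  lia.
Qed.

Fixpoint cL (L : list Z) : nat -> nat :=
  match L with
  | nil => fun _ => 0%nat
  | a :: L' => fun j => (ind (Z.to_nat (a mod 10)) j + cL L' j)%nat
  end.

Lemma cL_props L : coeff_total (cL L) = length L /\ lattice_sum (cL L) = ListSum L.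
Proof.
  induction L as [|a L [IH1 IH2]].
  - split; [reflexivity|]. unfold lattice_sum; cbn [seq map fold_right cL INR]. simpl ListSum. ring.
  - simpl cL. rewrite coeff_total_add, lattice_sum_add, IH1, IH2.
    assert (Hb := Z.mod_pos_bound a 10).
    assert (Hk : (Z.to_nat (a mod 10) < 10)%nat) by lia.
    destruct (ind_props _ Hk) as [H1 H2]. rewrite H1, H2, xi_pow, Z2Nat.id, E_mod by lia.
    split; reflexivity.
Qed.

Lemma ListSum_app A B : ListSum (A ++ B) = Cplus (ListSum A) (ListSum B).
Proof. induction A as [|a A IH]; simpl.
  - ring.
  - rewrite IH. ring. Qed.

Lemma ListSum_repeat a m : ListSum (repeat a m) = Cmult (RtoC (INR m)) (E a).
Proof. induction m as [|m IH]; simpl repeat; simpl ListSum.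
  - simpl INR. ring.
  - rewrite IH, S_INR, RtoC_plus. ring. Qed.

Definition Lc (c : nat -> nat) : list Z :=
  flat_map (fun j => repeat (Z.of_nat j) (c j)) (seq 0 10).

Lemma Lc_props c : length (Lc c) = coeff_total c /\ ListSum (Lc c) = lattice_sum c.
Proof.
  unfold Lc, coeff_total, lattice_sum. cbn [seq flat_map map fold_right].
  split.
  - rewrite !length_app, !repeat_length. simpl length. lia.
  - rewrite !ListSum_app, !ListSum_repeat, !xi_pow. simpl ListSum. ring.
Qed.

Lemma word_map_app a b v : word_map (a ++ b) v = word_map a (word_map b v).
Proof. induction a as [|g a IH]; simpl; [reflexivity|]. rewrite IH. reflexivity. Qed.

Lemma countT_app a b : countT (a ++ b) = (countT a + countT b)%nat.
Proof. unfold countT. rewrite filter_app, length_app. reflexivity. Qed.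

Definition word_map_cons g w v : word_map (g :: w) v = gen_map g (word_map w v) := eq_refl.

Lemma wm_add g u v : countT g = 0%nat -> word_map g (Cplus u v) = Cplus (word_map g u) (word_map g v).
Proof. induction g as [|x g IH]; intros H; [reflexivity|].
  destruct x; [discriminate| |]; rewrite !word_map_cons;
  rewrite IH by exact H; simpl gen_map; apply refl_add. Qed.

Lemma wm_inv g v : countT g = 0%nat -> word_map g (word_map (rev g) v) = v.
Proof. revert v; induction g as [|x g IH]; intros v H; [reflexivity|].
  simpl rev. rewrite word_map_app.
  destruct x; [discriminate| |]; rewrite !word_map_cons;
  rewrite IH by exact H; simpl; apply refl_invol; apply E_unit || (rewrite alpha1E; apply E_unit)
    || (rewrite alpha2E; apply E_unit).
Qed.

Import ListNotations.
Definition rot := [GR1; GR2].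
Definition gw (k : nat) : list gen :=
  match k with
  | 2 => nil | 4 => rot | 6 => rot ++ rot | 8 => rot ++ rot ++ rot | 0 => rot ++ rot ++ rot ++ rot
  | 3 => [GR1] | 5 => rot ++ [GR1] | 7 => rot ++ rot ++ [GR1] | 9 => rot ++ rot ++ rot ++ [GR1]
  | _ => rot ++ rot ++ rot ++ rot ++ [GR1]
  end.
Definition uw (k : nat) : list gen := gw k ++ GT :: rev (gw k).

Lemma uw_props k : (k < 10)%nat -> countT (uw k) = 1%nat /\
  forall v, word_map (uw k) v = Cplus v (E (Z.of_nat k)).
Proof.
  intros Hk. assert (H0 : countT (gw k) = 0%nat /\ word_map (gw k) (E 2) = E (Z.of_nat k)).
  { do 10 (destruct k as [|k]; [split; [reflexivity|]; cbn [gw rot app word_map fold_right gen_map];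
      repeat (rewrite r1E || rewrite r2E); apply E_eqm; reflexivity|]). lia. }
  destruct H0 as [H1 H2]. split.
  - unfold uw. rewrite countT_app, countT_cons_T.
    do 10 (destruct k as [|k]; [reflexivity|]). lia.
  - intros v. unfold uw. rewrite word_map_app.
    change (word_map (GT :: rev (gw k)) v) with (Tr (word_map (rev (gw k)) v)).
    unfold Tr. rewrite wm_add, wm_inv, alphaHE, H2 by exact H1. reflexivity.
Qed.

Lemma list_word L : exists w, countT w = length L /\ word_map w (RtoC 0) = ListSum L.
Proof.
  induction L as [|a L [w [Hc Hw]]].
  - exists nil; split; reflexivity.
  - assert (Hb := Z.mod_pos_bound a 10).
    assert (Hk : (Z.to_nat (a mod 10) < 10)%nat) by lia.
    destruct (uw_props _ Hk) as [H1 H2].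
    exists (uw (Z.to_nat (a mod 10)) ++ w). split.
    + rewrite countT_app, H1, Hc. reflexivity.
    + rewrite word_map_app, H2, Hw, Z2Nat.id, E_mod by lia. simpl ListSum. ring.
Qed.

Theorem proposition6p1 (n : nat) (z : C) :
  Q2 n z <->
  exists c : nat -> nat, (coeff_total c <= n)%nat /\ z = lattice_sum c.
Proof.
  split.
  - intros [w [Hw Hz]]. destruct (word_list w) as [L [HL HW]].
    destruct (cL_props L) as [H1 H2].
    exists (cL L). split; [lia|]. rewrite <- Hz, HW, H2. reflexivity.
  - intros [c [Hc Hz]]. destruct (Lc_props c) as [H1 H2].
    destruct (list_word (Lc c)) as [w [Hw1 Hw2]].
    exists w. split; [lia|]. rewrite Hw2, H2, Hz. reflexivity.
Qed.
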